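(* There is an absolute constant $c>0$ such that for every comparison-based search algorithm $A$ (deterministic or randomized) that takes a predicted distribution $\hat p$ on $[n]$ and a target key and locates the target among sorted keys $a_1<\dots<a_n$, and for every $n\ge1$, every $h\in[0,\log n]$ and every $\eta\in[1,n]$: the supremum of the expected number of comparisons made by $A$, taken over all instances $(p,\hat p)$ of distributions on $[n]$ with $H(p)\le h$ and earth mover's distance between $p$ and $\hat p$ at most $\eta$ (target $a=a_i$ drawn with probability $p_i$), is at least $c\,(h+\log\eta)$. In particular, the worst-case expected query complexity of any such algorithm is $\Omega(H(p)+\log\eta)$.
   Context: All logarithms are base 2. $H(p)=-\sum_i p_i\log p_i$ is the entropy. The earth mover's distance between distributions $P,Q$ on $[n]$ is $\inf_{\gamma\in\Pi(P,Q)}\mathbb{E}_{(x,y)\sim\gamma}|x-y|$, with $\Pi(P,Q)$ the set of couplings of $P$ and $Q$. A comparison of the target $a$ with a key $a_j$ returns whether $a<a_j$, $a=a_j$ or $a>a_j$ and counts as one query. (The paper combines its lower bound $\Omega(\log\eta)$ for instances with $H(p)=0$ with the known fact that any comparison-based search needs $\Omega(H(p))$ expected comparisons even when $\hat p=p$.) *)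

(* Defs.v *)
From HB Require Import structures.
From mathcomp Require Import all_boot all_order all_algebra.
From mathcomp Require Import all_classical all_reals.
From mathcomp Require Import ereal sequences exp.
From mathcomp Require Import Rstruct.


Set Implicit Arguments.
Unset Strict Implicit.
Unset Printing Implicit Defensive.

Import Order.TTheory GRing.Theory Num.Theory.
Local Open Scope ring_scope.
Local Open Scope classical_set_scope.

Notation R := Rdefinitions.R.

Definition log2 (x : R) : R := ln x / ln 2.

Definition is_distr (n : nat) (p : 'I_n -> R) : Prop :=
  (forall i, 0 <= p i) /\ \sum_(i < n) p i = 1.

(** Shannon entropy (base 2), H(p) = - sum_i p_i log p_i (with 0 log 0 = 0:
    the term p_i * log p_i is 0 when p_i = 0). *)
Definition entropy (n : nat) (p : 'I_n -> R) : R :=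
  - \sum_(i < n) p i * log2 (p i).

(** Couplings of P and Q on [n] x [n]. Index i : 'I_n stands for the
    point i+1 of [n]; distances |x - y| are unaffected by the shift. *)
Definition coupling (n : nat) (P Q : 'I_n -> R) (g : 'I_n -> 'I_n -> R) : Prop :=
  (forall x y, 0 <= g x y) /\
  (forall x, \sum_(y < n) g x y = P x) /\
  (forall y, \sum_(x < n) g x y = Q y).

Definition emd (n : nat) (P Q : 'I_n -> R) : R :=
  inf [set e : R | exists g, coupling P Q g /\
         e = \sum_(x < n) \sum_(y < n) g x y * `| (x%:R : R) - (y%:R : R) |].

(** Deterministic comparison-based search algorithms on the sorted keys
    a_1 < ... < a_n, as ternary comparison (decision) trees.  Since the
    algorithm only accesses the target through comparisons with keys, the
    target a = a_i is represented by its index i.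
    [Query j tlt teq tgt] compares the target with key a_j and continues in
    tlt / teq / tgt according to whether a < a_j, a = a_j, a > a_j.
    [Answer i] stops and reports that the target is a_i. *)
Inductive ctree (n : nat) : Type :=
| Answer : 'I_n -> ctree n
| Query : 'I_n -> ctree n -> ctree n -> ctree n -> ctree n.

Arguments Answer {n}.
Arguments Query {n}.

Fixpoint output (n : nat) (t : ctree n) (i : 'I_n) : 'I_n :=
  match t with
  | Answer j => j
  | Query j tl te tg =>
      if (nat_of_ord i < nat_of_ord j)%N then output tl i else if i == j then output te i
      else output tg i
  end.

Fixpoint ncomp (n : nat) (t : ctree n) (i : 'I_n) : nat :=
  match t with
  | Answer _ => 0%N
  | Query j tl te tg =>
      (if (nat_of_ord i < nat_of_ord j)%N then ncomp tl i else if i == j then ncomp te i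
       else ncomp tg i).+1
  end.

Definition correct (n : nat) (t : ctree n) : Prop := forall i, output t i = i.

(** A randomized algorithm (given a fixed prediction) is a probability
    distribution, with countable support, over deterministic comparison
    trees: tree [tree k] is used with probability [weight k]. Deterministic algorithms are
    the special case of a point mass. *)
Record rand_search (n : nat) := RandSearch {
  tree : nat -> ctree n;
  weight : nat -> R;
  weight_ge0 : forall k, 0 <= weight k;
  weight_sum1 : (\sum_(k <oo) (weight k)%:E)%E = 1%E;
  tree_correct : forall k, 0 < weight k -> correct (tree k)
}.

Definition pred_search (n : nat) := ('I_n -> R) -> rand_search n.

(** Expected number of comparisons of A on instance (p, phat): the target
    a = a_i is drawn with probability p_i, independently of A's coins.
    Valued in the extended reals (it may be +oo). *)
Definition exp_cost (n : nat) (A : pred_search n) (p phat : 'I_n -> R) : \bar R :=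
  (\sum_(k <oo)
     ((weight (A phat) k * \sum_(i < n) p i * (ncomp (tree (A phat) k) i)%:R)%:E))%E.

Definition worst_exp_cost (n : nat) (A : pred_search n) (h eta : R) : \bar R :=
  ereal_sup [set c : \bar R | exists p phat : 'I_n -> R,
     [/\ is_distr p, is_distr phat, entropy p <= h, emd p phat <= eta &
         c = exp_cost A p phat]].

(* Main.v *)
Require Import Defs.
From HB Require Import structures.
From mathcomp Require Import all_boot all_order all_algebra.
From mathcomp Require Import all_classical all_reals.
From mathcomp Require Import ereal sequences exp.
From mathcomp Require Import Rstruct.
From mathcomp Require Import zify ring lra.
Import Order.TTheory GRing.Theory Num.Theory.
Local Open Scope ring_scope.

Definition small n (t : ctree n) (d : nat) : {set 'I_n} :=
  [set i | (output t i == i) && (ncomp t i < d)%N].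

Arguments small {n}.

Lemma small_card n (t : ctree n) d : (#|small t d| <= 3 ^ d)%N.
Proof.
elim: t d => [j|j tl IHl te IHe tg IHg] d.
  apply: (@leq_trans 1%N); last by rewrite expn_gt0.
  rewrite -(cards1 j); apply: subset_leq_card. apply/fintype.subsetP => i.
  by rewrite !inE /= => /andP[/eqP <- _].
case: d => [|d].
  rewrite (_ : small _ _ = finset.set0) ?cards0 //; apply/setP => i.
  by rewrite !inE ltn0 andbF.
apply: (@leq_trans (#|small tl d| + #|small te d| + #|small tg d|)).
  apply: (@leq_trans #|small tl d :|: small te d :|: small tg d|).
    apply: subset_leq_card; apply/fintype.subsetP => i.
    rewrite !inE /=; case: ifP => _; first by move=> ->.
    by case: ifP => _ ->; rewrite ?orbT.
  apply: (leq_trans (leq_card_setU _ _)); rewrite leq_add2r.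
  exact: (leq_card_setU _ _).
by rewrite expnS mulSn mul2n -addnn addnA !leq_add.
Qed.

Lemma ncomp_pos n (t : ctree n) i : (2 <= n)%N -> correct t -> (0 < ncomp t i)%N.
Proof.
case: t => [j|//] n2 /= C.
have h0 : (0 < n)%N by lia.
have h1 : (1 < n)%N by lia.
have := C (Ordinal h0); have := C (Ordinal h1); rewrite /= => e1 e0.
by move: (congr1 val (etrans (esym e1) e0)).
Qed.

Lemma card_lt n m : (m <= n)%N -> #|[pred i : 'I_n | (i < m)%N]| = m.
Proof.
move=> mn; rewrite -sum1_card.
have -> : (\sum_(i in [pred i : 'I_n | (i < m)%N]) 1 = \sum_(i < n | (i < m)%N) 1)%N.
  by apply: eq_bigl.
by rewrite (big_ord_narrow mn) big_const_ord iter_addn_0 mul1n.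
Qed.

Lemma sum_lb n (t : ctree n) m d : (m <= n)%N -> correct t ->
  (d * (m - 3 ^ d) <= \sum_(i < n | (i < m)%N) ncomp t i)%N.
Proof.
move=> mn C.
have e1 : forall i : 'I_n, (d * (1 - (ncomp t i < d)%N) <= ncomp t i)%N.
  by move=> i; case: ltnP => h /=; lia.
apply: (@leq_trans (\sum_(i < n | (i < m)%N) d * (1 - (ncomp t i < d)%N))); last first.
  by apply: leq_sum => i _; exact: e1.
rewrite -big_distrr /= leq_mul2l; apply/orP; right.
have hm : (\sum_(i < n | (i < m)%N) 1 = m)%N.
  by rewrite (big_ord_narrow mn) big_const_ord iter_addn_0 mul1n.
have hB : (\sum_(i < n | (i < m)%N) ((ncomp t i < d)%N : nat) <= 3 ^ d)%N.
  apply: (@leq_trans #|small t d|); last exact: small_card.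
  rewrite -sum1_card.
  rewrite big_mkcond [X in (_ <= X)%N]big_mkcond /=; apply: leq_sum => i _.
  rewrite inE C eqxx /=; by case: (i < m)%N; case: (ncomp t i < d)%N.
have hS : (\sum_(i < n | (i < m)%N) 1 = \sum_(i < n | (i < m)%N) (1 - (ncomp t i < d)%N)
   + \sum_(i < n | (i < m)%N) ((ncomp t i < d)%N : nat))%N.
  rewrite -big_split /=; apply: eq_bigr => i _; by case: (ncomp t i < d)%N.
move: hm hS hB.
set X := (\sum_(i < n | (i < m)%N) (1 - _))%N.
set Y := (\sum_(i < n | (i < m)%N) nat_of_bool _)%N.
set Z := (\sum_(i < n | (i < m)%N) 1)%N.
lia.
Qed.

Lemma key_nat n (t : ctree n) m : (2 <= m)%N -> (m <= n)%N -> correct t ->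
  ((trunc_log 2 m).+1 * m <= 8 * \sum_(i < n | (i < m)%N) ncomp t i)%N.
Proof.
move=> m2 mn C.
set S := (\sum_(i < n | (i < m)%N) ncomp t i)%N.
have hS1 : (m <= S)%N.
  have <- : (\sum_(i < n | (i < m)%N) 1 = m)%N.
    by rewrite (big_ord_narrow mn) big_const_ord iter_addn_0 mul1n.
  apply: leq_sum => i _; apply: ncomp_pos => //; lia.
set k := trunc_log 2 m.
have hk : (2 ^ k <= m)%N by apply: trunc_logP; lia.
have [k7|k8] := leqP k 7.
  apply: (@leq_trans (8 * m)); first by rewrite leq_mul2r; apply/orP; right.
  by rewrite leq_mul2l hS1 orbT.
set d := (k.-1 %/ 2)%N.
have hd : (k.-1 <= 2 * d + 1)%N by rewrite /d; lia.
have hd2 : (2 * d <= k.-1)%N by rewrite /d; lia.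
have h3 : (3 ^ d <= 2 ^ (d.*2))%N.
  have pw : forall e, (3 ^ e <= 4 ^ e)%N by elim=> // e IH; rewrite !expnS leq_mul.
  by rewrite -mul2n expnM; apply: pw.
have h4 : (2 * 2 ^ (d.*2) <= m)%N.
  apply: leq_trans hk; rewrite -expnS; apply: leq_pexp2l => //; lia.
have hL := @sum_lb _ t m d mn C.
rewrite -/S in hL.
have h5 : (m <= 2 * (m - 3 ^ d))%N by lia.
have h6 : (k.+1 <= 4 * d)%N by lia.
apply: (@leq_trans (4 * d * m)); first by rewrite leq_mul2r h6 orbT.
apply: (@leq_trans (8 * (d * (m - 3 ^ d)))); last by rewrite leq_mul2l hL orbT.
have -> : (8 * (d * (m - 3 ^ d)) = 4 * d * (2 * (m - 3 ^ d)))%N by lia.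
by rewrite leq_mul2l h5 orbT.
Qed.


Lemma weight_series n (A : rand_search n) (L : R) : 0 <= L ->
  (\sum_(k <oo) (weight A k * L)%:E)%E = L%:E.
Proof.
move=> L0.
rewrite (eq_eseriesr (fun k _ => (_ : (weight A k * L)%:E = L%:E * (weight A k)%:E)%E)); last first.
  by move=> k _; rewrite -EFinM mulrC.
rewrite nneseriesZl; last by move=> k _; rewrite lee_fin weight_ge0.
by rewrite weight_sum1 mule1.
Qed.

Lemma cost_ge n (A : pred_search n) p phat (L : R) : 0 <= L ->
  (forall t, correct t -> L <= \sum_(i < n) p i * (ncomp t i)%:R) ->
  (L%:E <= exp_cost A p phat)%E.
Proof.
move=> L0 H; rewrite /exp_cost -(@weight_series _ (A phat) L L0).
apply: lee_nneseries => [k _ _|k _].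
  by rewrite lee_fin mulr_ge0 // weight_ge0.
rewrite lee_fin; have := weight_ge0 (A phat) k; rewrite le0r => /orP[/eqP ->|wp].
  by rewrite !mul0r.
by rewrite ler_wpM2l ?weight_ge0 //; apply: H; apply: tree_correct.
Qed.

Lemma ln2_gt0 : 0 < ln (2 : R).
Proof. by apply: ln_gt0; rewrite ltr1n. Qed.

Lemma log2_le (m : nat) : (1 <= m)%N -> log2 m%:R <= (trunc_log 2 m).+1%:R.
Proof.
move=> m1; rewrite /log2 ler_pdivrMr ?ln2_gt0 //.
have h := @trunc_log_ltn 2 m isT.
have -> : (trunc_log 2 m).+1%:R * ln (2 : R) = ln ((2 : R) ^+ (trunc_log 2 m).+1).
  by rewrite lnXn // mulr_natl.
rewrite ler_ln ?posrE ?exprn_gt0 ?ltr0n //.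
by rewrite -natrX ler_nat ltnW.
Qed.

Lemma avg_lb n (t : ctree n) (m : nat) : (1 <= m)%N -> (m <= n)%N -> correct t ->
  log2 m%:R / 8 <= m%:R^-1 * (\sum_(i < n | (i < m)%N) ncomp t i)%:R.
Proof.
move=> m1 mn C.
have [m1'|m2] := leqP m 1.
  have -> : m = 1%N by lia.
  by rewrite /log2 ln1 !mul0r mulr_ge0 ?invr_ge0 ?ler0n.
have K := @key_nat _ t m m2 mn C.
have Kr : ((trunc_log 2 m).+1%:R * m%:R <= 8 * (\sum_(i < n | (i < m)%N) ncomp t i)%:R :> R).
  by rewrite -natrM -(natrM _ 8) ler_nat.
have L := @log2_le m m1.
have mp : (0 : R) < m%:R by rewrite ltr0n; lia.
have -> : log2 m%:R / 8 = m%:R^-1 * (log2 m%:R * m%:R / 8).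
  by field; rewrite lt0r_neq0.
apply: ler_wpM2l; first by rewrite invr_ge0 ltW.
move: Kr L mp; set S := (\sum_(i < n | (i < m)%N) ncomp t i)%:R; set x := log2 _; set K1 := (_.+1)%:R; set M := m%:R.
move=> Kr L mp.
have : x * M <= K1 * M by rewrite ler_pM2r.
lra.
Qed.


Definition unif n (m : nat) : 'I_n -> R := fun i => if (i < m)%N then m%:R^-1 else 0.
Definition delta n (j : 'I_n) : 'I_n -> R := fun i => if i == j then 1 else 0.
Arguments unif {n}.
Arguments delta {n}.

Lemma sum_delta n (j : 'I_n) (F : 'I_n -> R) : \sum_(i < n) delta j i * F i = F j.
Proof.
rewrite (bigD1 j) //= /delta eqxx mul1r big1 ?addr0 // => i /negbTE ->.
by rewrite mul0r.
Qed.

Arguments sum_delta {n}.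

Lemma sum_unif n (m : nat) (F : 'I_n -> R) :
  \sum_(i < n) unif m i * F i = m%:R^-1 * \sum_(i < n | (i < m)%N) F i.
Proof.
rewrite mulr_sumr [RHS]big_mkcond /=; apply: eq_bigr => i _; rewrite /unif.
by case: ifP => _; rewrite ?mul0r ?mulr0.
Qed.

Arguments sum_unif {n}.

Lemma sum1R n (m : nat) : (m <= n)%N -> \sum_(i < n | (i < m)%N) (1 : R) = m%:R.
Proof. by move=> mn; rewrite (big_ord_narrow mn) sumr_const card_ord. Qed.

Lemma distr_delta n (j : 'I_n) : is_distr (delta j).
Proof.
split; first by move=> i; rewrite /delta; case: ifP.
have := sum_delta j (fun _ => 1); rewrite /= => e.
by rewrite -[RHS]e; apply: eq_bigr => i _; rewrite mulr1.
Qed.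

Lemma distr_unif n (m : nat) : (1 <= m)%N -> (m <= n)%N -> is_distr (unif m : 'I_n -> R).
Proof.
move=> m1 mn; split; first by move=> i; rewrite /unif; case: ifP => // _; rewrite invr_ge0 ler0n.
have := sum_unif m (fun _ => 1); rewrite /= => e.
rewrite (eq_bigr (fun i => unif m i * 1)); last by move=> i _; rewrite mulr1.
rewrite e sum1R // mulVf //.
by rewrite pnatr_eq0; lia.
Qed.

Lemma log2_1 : log2 1 = 0.
Proof. by rewrite /log2 ln1 mul0r. Qed.

Lemma entropy_delta n (j : 'I_n) : entropy (delta j) = 0.
Proof.
rewrite /entropy (sum_delta j (fun i => log2 (delta j i))) /delta eqxx log2_1.
by rewrite oppr0.
Qed.

Lemma entropy_unif n (m : nat) : (1 <= m)%N -> (m <= n)%N ->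
  entropy (unif m : 'I_n -> R) = log2 m%:R.
Proof.
move=> m1 mn.
have mp : (0 : R) < m%:R by rewrite ltr0n.
rewrite /entropy (eq_bigr (fun i => unif m i * log2 (m%:R^-1))); last first.
  by move=> i _; rewrite /unif; case: ifP => //; rewrite !mul0r.
rewrite sum_unif (big_ord_narrow mn) sumr_const card_ord.
rewrite -[X in _ * X]mulr_natl mulrA mulVf ?lt0r_neq0 // mul1r.
by rewrite /log2 lnV ?posrE // mulNr opprK.
Qed.

Lemma emd_le n (P Q : 'I_n -> R) g e : coupling P Q g ->
  \sum_(x < n) \sum_(y < n) g x y * `| (x%:R : R) - (y%:R : R) | <= e -> emd P Q <= e.
Proof.
move=> cg le; apply: le_trans le; rewrite /emd.
apply: ge_inf; last by exists g.
exists 0 => z [g' [[g0 _] ->]].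
by apply: sumr_ge0 => x _; apply: sumr_ge0 => y _; rewrite mulr_ge0.
Qed.

Lemma emd_self n (p : 'I_n -> R) : (forall i, 0 <= p i) -> emd p p <= 0.
Proof.
move=> p0.
apply: (@emd_le _ _ _ (fun x y => if x == y then p x else 0)).
  split; first by move=> x y; case: eqP.
  split.
    move=> x; rewrite (bigD1 x) //= eqxx big1 ?addr0 // => y.
    by rewrite eq_sym => /negbTE ->.
  move=> y; rewrite (bigD1 y) //= eqxx big1 ?addr0 // => x.
  by move=> /negbTE ->.
rewrite big1 // => x _; rewrite big1 // => y _.
by case: eqP => [->|]; rewrite ?subrr ?normr0 ?mulr0 ?mul0r.
Qed.

Lemma emd_delta_unif n (j : 'I_n) (m : nat) (eta : R) : (1 <= m)%N -> (m <= n)%N ->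
  (j < m)%N -> m%:R <= eta -> emd (delta j) (unif m) <= eta.
Proof.
move=> m1 mn jm me.
have du := @distr_unif n m m1 mn; case: du => u0 u1.
apply: (@emd_le _ _ _ (fun x y => delta j x * unif m y)).
  split; first by move=> x y; rewrite mulr_ge0 // /delta; case: eqP.
  split.
    by move=> x; rewrite -mulr_sumr u1 mulr1.
  by move=> y; rewrite (sum_delta j (fun _ => unif m y)).
rewrite (eq_bigr (fun x => delta j x * \sum_(y < n) unif m y * `| (x%:R : R) - (y%:R : R) |)); last first.
  by move=> x _; rewrite mulr_sumr; apply: eq_bigr => y _; rewrite mulrA.
rewrite (sum_delta j (fun x => \sum_(y < n) unif m y * `| (x%:R : R) - (y%:R : R) |)).
apply: (@le_trans _ _ (\sum_(y < n) unif m y * eta)); last by rewrite -mulr_suml u1 mul1r.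
apply: ler_sum => y _; rewrite /unif; case: ifP => ym; last by rewrite !mul0r.
apply: ler_wpM2l; first by rewrite invr_ge0 ler0n.
apply: le_trans me.
have ha : (j%:R : R) <= m%:R by rewrite ler_nat ltnW.
have hb : (y%:R : R) <= m%:R by rewrite ler_nat ltnW.
have ha0 : (0 : R) <= j%:R by [].
have hb0 : (0 : R) <= y%:R by [].
rewrite ler_norml; apply/andP; split; lra.
Qed.



Lemma log2_ge0 (m : nat) : (1 <= m)%N -> 0 <= log2 m%:R.
Proof.
move=> m1; rewrite /log2 divr_ge0 ?ln_ge0 ?ler1n // ltW //; exact: ln2_gt0.
Qed.

Lemma costB n (A : pred_search n) phat (m : nat) : (1 <= m)%N -> (m <= n)%N ->
  exists j : 'I_n, (j < m)%N /\ ((log2 m%:R / 8)%:E <= exp_cost A (delta j) phat)%E.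
Proof.
move=> m1 mn.
set L := log2 m%:R / 8.
have L0 : 0 <= L by rewrite /L divr_ge0 ?log2_ge0.
set E := fun j : 'I_n => exp_cost A (delta j) phat.
have E0 : forall j, (0 <= E j)%E.
  move=> j; apply: nneseries_ge0 => k _ _; rewrite lee_fin mulr_ge0 ?weight_ge0 //.
  by apply: sumr_ge0 => i _; rewrite mulr_ge0 // /delta; case: eqP.
have Esum : ((m%:R * L)%:E <= \sum_(j < n | (j < m)%N) E j)%E.
  have -> : (\sum_(j < n | (j < m)%N) E j = \sum_(j < n | (j < m)%N)
      \sum_(k <oo) ((weight (A phat) k * (ncomp (tree (A phat) k) j)%:R)%:E))%E.

    apply: eq_bigr => j _; rewrite /E /exp_cost; apply: congr_lim; apply/funext => N; apply: eq_bigr => k _.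
    by rewrite (sum_delta j (fun i => (ncomp (tree (A phat) k) i)%:R)).
  rewrite -nneseries_sum; last first.
    by move=> j k _; rewrite lee_fin mulr_ge0 ?weight_ge0.
  have mL0 : 0 <= m%:R * L by rewrite mulr_ge0.
  rewrite -(@weight_series _ (A phat) (m%:R * L) mL0).
  apply: lee_nneseries => [k _ _|k _].
    by rewrite lee_fin mulr_ge0 ?weight_ge0.
  rewrite sumEFin lee_fin -mulr_sumr.
  have := weight_ge0 (A phat) k; rewrite le0r => /orP[/eqP ->|wp].
    by rewrite !mul0r.
  rewrite ler_wpM2l ?weight_ge0 //.
  have C : correct (tree (A phat) k) by apply: tree_correct.
  have := @avg_lb _ _ m m1 mn C.
  rewrite -/L natr_sum => H.
  have mp : (0 : R) < m%:R by rewrite ltr0n.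
  have mi : (0 : R) < m%:R^-1 by rewrite invr_gt0.
  rewrite -(ler_pM2l mi) mulrA mulVf ?lt0r_neq0 // mul1r; exact: H.
have m0 : (0 < n)%N by lia.
set i0 := Ordinal m0.
have Pi0 : (i0 < m)%N by [].
have [jm Pjm Hjm] := @arg_maxP _ _ _ i0 (fun j : 'I_n => (j < m)%N) E Pi0.
exists jm; split => //.
have H2 : (\sum_(j < n | (j < m)%N) E j <= \sum_(j < n | (j < m)%N) E jm)%E.
  by apply: lee_sum => j Pj; apply: Hjm.
move: (le_trans Esum H2).
rewrite (big_ord_narrow mn) sumr_const card_ord.
rewrite -/(E jm).
move: (E0 jm); case: (E jm) => [r||] //= r0.
have -> : ((r%:E *+ m)%R = (r *+ m)%:E)%E by elim: (m) => // k IH; rewrite !mulrS IH.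
rewrite lee_fin -[r *+ m]mulr_natr [m%:R * L]mulrC ler_pM2r ?ltr0n // => h.
by move=> _; rewrite leey.
Qed.


Lemma log2_eta (eta : R) : 1 <= eta -> log2 eta <= 1 + log2 (Num.truncn eta)%:R.
Proof.
move=> e1.
have e0 : 0 <= eta by apply: le_trans e1.
have /andP[hl hr] := truncn_itv e0.
have m1 : (0 < Num.truncn eta)%N by rewrite truncn_gt0.
set m := Num.truncn eta in hl hr m1 *.
have mp : (0 : R) < m%:R by rewrite ltr0n.
have h2 : eta <= 2 * m%:R.
  apply: (le_trans (ltW hr)); rewrite -natrM ler_nat; lia.
have l2 := ln2_gt0.
have : ln eta <= ln 2 + ln m%:R.
  rewrite -lnM ?posrE // ler_ln ?posrE ?mulr_gt0 //; exact: lt_le_trans e1.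
rewrite /log2 => h.
have -> : 1 + ln m%:R / ln 2 = (ln 2 + ln m%:R) / ln 2 :> R by field; rewrite lt0r_neq0.
by rewrite ler_pM2r ?invr_gt0.
Qed.

Lemma log2_pow (j : nat) : log2 (2 ^+ j) = j%:R.
Proof.
have l2 := ln2_gt0.
rewrite /log2 lnXn // -[ln 2 *+ j]mulr_natr; field; exact: lt0r_neq0.
Qed.

Lemma worst_ge n (A : pred_search n) h eta p phat : is_distr p -> is_distr phat ->
  entropy p <= h -> emd p phat <= eta -> (exp_cost A p phat <= worst_exp_cost A h eta)%E.
Proof.
move=> dp dq hp he; apply: ereal_sup_ubound; exists p, phat; split => //.
Qed.

Lemma cost_unif n (A : pred_search n) (m : nat) : (1 <= m)%N -> (m <= n)%N ->
  ((log2 m%:R / 8)%:E <= exp_cost A (unif m) (unif m))%E.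
Proof.
move=> m1 mn; apply: cost_ge.
  by rewrite divr_ge0 ?log2_ge0.
move=> t C; rewrite sum_unif -natr_sum; exact: avg_lb.
Qed.

Lemma cost_one n (A : pred_search n) (j : 'I_n) : (2 <= n)%N ->
  (1%:E <= exp_cost A (delta j) (delta j))%E.
Proof.
move=> n2; apply: cost_ge => // t C.
rewrite (sum_delta j (fun i => (ncomp t i)%:R)) ler1n.
exact: ncomp_pos.
Qed.

Theorem corollary3p3 :
  exists c : R, 0 < c /\
    forall (n : nat) (A : pred_search n) (h eta : R),
      (1 <= n)%N ->
      0 <= h <= log2 n%:R ->
      1 <= eta <= n%:R ->
      ((c * (h + log2 eta))%:E <= worst_exp_cost A h eta)%E.
Proof.
exists (1 / 32); split => // n A h eta n1 /andP[h0 hn] /andP[e1 en].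
have l2 := ln2_gt0.
have np : (0 : R) < n%:R by rewrite ltr0n.
have /andP[hjl hjr] := truncn_itv h0.
set j := Num.truncn h in hjl hjr.
set mA := (2 ^ j)%N.
have mA1 : (1 <= mA)%N by rewrite expn_gt0.
have mAn : (mA <= n)%N.
  rewrite -(ler_nat R) /mA natrX -ler_ln ?posrE ?exprn_gt0 //.
  rewrite lnXn // -[ln 2 *+ j]mulr_natr.
  have : j%:R <= log2 n%:R by apply: le_trans hn.
  rewrite /log2 ler_pdivlMr // mulrC //.
have XA : ((j%:R / 8)%:E <= worst_exp_cost A h eta)%E.
  apply: (@le_trans _ _ (exp_cost A (unif mA) (unif mA))); first last.
  apply: worst_ge.
  - exact: distr_unif.
  - exact: distr_unif.
  - by rewrite entropy_unif // /mA natrX log2_pow.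
  - case: (@distr_unif n mA mA1 mAn) => u0 _.
    apply: le_trans (@emd_self _ _ u0) _; exact: le_trans ler01 e1.
  by rewrite -(log2_pow j) -natrX; exact: cost_unif.
have e0 : 0 <= eta by apply: le_trans e1.
set mB := Num.truncn eta.
have mB1 : (1 <= mB)%N by rewrite truncn_gt0.
have mBn : (mB <= n)%N.
  have nK : Num.truncn (n%:R : R) = n by exact: natrK.
  by rewrite -[X in (_ <= X)%N]nK /mB le_truncn.
have mBe : mB%:R <= eta by rewrite truncn_le.
have [jB [jBm XB0]] := @costB n A (unif mB) mB mB1 mBn.
have XB : ((log2 mB%:R / 8)%:E <= worst_exp_cost A h eta)%E.
  apply: le_trans XB0 _; apply: worst_ge.
  - exact: distr_delta.
  - exact: distr_unif.
  - by rewrite entropy_delta.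
  - exact: emd_delta_unif.
have LB := @log2_eta eta e1.
have LB0 := @log2_ge0 mB mB1.
have [n1'|n2] := leqP n 1.
  have nE : n = 1%N by apply/eqP; rewrite eqn_leq n1' n1.
  rewrite nE /log2 ln1 mul0r in hn.
  have hE : h = 0 by lra.
  have eE : eta = 1 by rewrite nE in en; lra.
  have -> : 1 / 32 * (h + log2 eta) = 0 by rewrite hE eE log2_1 addr0 mulr0.
  apply: le_trans XA; rewrite lee_fin divr_ge0 //.
have X1 := @cost_one n A (Ordinal n1) n2.
have X1' : (1%:E <= worst_exp_cost A h eta)%E.
  apply: le_trans X1 _; apply: worst_ge.
  - exact: distr_delta.
  - exact: distr_delta.
  - by rewrite entropy_delta.
  - apply: (@le_trans _ _ 0); last exact: le_trans ler01 e1.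
    by apply: emd_self => i; rewrite /delta; case: eqP.
move: XA XB X1'; case: (worst_exp_cost A h eta) => [w| |] //.
- rewrite !lee_fin => XA XB X1'; lra.
- by move=> *; rewrite leey.
Qed.
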